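(* Fix $p\geq 3$ and put $\lambda=\lambda_p=2\cos(\pi/p)$. Then every admissible $\lambda$-continued fraction converges; that is, for every real $\alpha$ with admissible $\lambda$-continued fraction $[r_0;r_1,\dots]$, the limit $\lim_{n\to\infty}[r_0;r_1,\dots,r_n]$ exists.
   Context: For integers $r_0,\dots,r_n$, the finite $\lambda$-continued fraction is $[r_0;r_1,\dots,r_n]= r_0\lambda-\cfrac{1}{r_1\lambda-\cfrac{1}{\ddots-\cfrac{1}{r_n\lambda}}}$, and an infinite one $[r_0;r_1,\dots]$ is $\lim_{n\to\infty}[r_0;r_1,\dots,r_n]$ if the limit exists. Every finite real $\alpha$ is expanded by the ''next integral multiple of $\lambda$'' algorithm: $\alpha_0=\alpha$, and for $j\ge 0$, $r_j=\lfloor \alpha_j/\lambda\rfloor+1$ and $\alpha_{j+1}=\frac{1}{r_j\lambda-\alpha_j}$. The resulting sequence $[r_0;r_1,\dots]$ is the $\lambda$-continued fraction of $\alpha$; a $\lambda$-continued fraction is called admissible if it arises from some finite real number by this algorithm. *)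

(* Defs.v *)
From Stdlib Require Import Reals ZArith.
Open Scope R_scope.

Definition lam (p : nat) : R := 2 * cos (PI / INR p).

Definition floorR (x : R) : Z := Int_part x.

Definition digit (l x : R) : Z := (floorR (x / l) + 1)%Z.

Fixpoint alpha_seq (l a : R) (j : nat) : R :=
  match j with
  | O => a
  | S j' => let x := alpha_seq l a j' in / (IZR (digit l x) * l - x)
  end.

Definition lcf_digits (l a : R) (j : nat) : Z := digit l (alpha_seq l a j).

(* cf_tail l r k m = [r_k; r_{k+1}, ..., r_{k+m}]
   = r_k l - 1/(r_{k+1} l - 1/( ... - 1/(r_{k+m} l))) *)
Fixpoint cf_tail (l : R) (r : nat -> Z) (k m : nat) : R :=
  match m with
  | O => IZR (r k) * l
  | S m' => IZR (r k) * l - / cf_tail l r (S k) m'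
  end.

Definition lcf_finite (l : R) (r : nat -> Z) (n : nat) : R := cf_tail l r 0 n.

(* Main.v *)
Require Import Defs.
From Stdlib Require Import Reals ZArith Lra Lia.
Open Scope R_scope.

Lemma digit_gt (l x : R) : 0 < l -> x < IZR (digit l x) * l.
Proof.
  intro Hl. unfold digit, floorR. rewrite plus_IZR.
  destruct (base_Int_part (x / l)) as [_ H].
  assert (x / l < IZR (Int_part (x / l)) + 1) by lra.
  apply Rmult_lt_compat_r with (r := l) in H0; auto.
  unfold Rdiv in H0. rewrite Rmult_assoc, Rinv_l in H0; lra.
Qed.

Lemma alpha_shift (l a : R) (j : nat) :
  alpha_seq l a (S j) = alpha_seq l (alpha_seq l a 1) j.
Proof.
  induction j as [|j IH]; [reflexivity|].
  change (alpha_seq l a (S (S j))) with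
    (/ (IZR (digit l (alpha_seq l a (S j))) * l - alpha_seq l a (S j))).
  rewrite IH. reflexivity.
Qed.

Lemma cf_tail_shift (l : R) (r : nat -> Z) (m : nat) : forall k,
  cf_tail l r (S k) m = cf_tail l (fun j => r (S j)) k m.
Proof.
  induction m as [|m IH]; intro k; simpl; [reflexivity|].
  rewrite IH. reflexivity.
Qed.

Lemma cf_tail_ext (l : R) (r r' : nat -> Z) (E : forall j, r j = r' j) (m : nat) :
  forall k, cf_tail l r k m = cf_tail l r' k m.
Proof.
  induction m as [|m IH]; intro k; simpl; rewrite E; [reflexivity|].
  rewrite IH. reflexivity.
Qed.

Definition cc (l a : R) (n : nat) := cf_tail l (lcf_digits l a) 0 n.

Lemma cc_S (l a : R) (n : nat) :
  cc l a (S n) = IZR (digit l a) * l - / cc l (alpha_seq l a 1) n.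
Proof.
  unfold cc. simpl cf_tail at 1. rewrite cf_tail_shift.
  f_equal. f_equal. apply cf_tail_ext. intro j. unfold lcf_digits.
  rewrite alpha_shift. reflexivity.
Qed.

Lemma a1_pos (l a : R) (Hl : 0 < l) :
  0 < alpha_seq l a 1 /\ a = IZR (digit l a) * l - / alpha_seq l a 1.
Proof.
  pose proof (digit_gt l a Hl). simpl.
  split; [apply Rinv_0_lt_compat; lra|].
  rewrite Rinv_inv. lra.
Qed.

Lemma cc0 (l a : R) : cc l a 0 = IZR (digit l a) * l.
Proof. reflexivity. Qed.

Lemma lower (l : R) (Hl : 0 < l) (n : nat) : forall a, a < cc l a n.
Proof.
  induction n as [|n IH]; intro a.
  - rewrite cc0. apply digit_gt; auto.
  - destruct (a1_pos l a Hl) as [Hp He].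
    rewrite cc_S. pose proof (IH (alpha_seq l a 1)).
    assert (/ cc l (alpha_seq l a 1) n < / alpha_seq l a 1).
    { apply Rinv_lt_contravar; auto. apply Rmult_lt_0_compat; lra. }
    lra.
Qed.

Lemma decr (l : R) (Hl : 0 < l) (n : nat) : forall a, cc l a (S n) < cc l a n.
Proof.
  induction n as [|n IH]; intro a.
  - rewrite cc_S, (cc0 l a).
    destruct (a1_pos l a Hl) as [Hp He].
    pose proof (lower l Hl 0 (alpha_seq l a 1)).
    assert (0 < / cc l (alpha_seq l a 1) 0) by (apply Rinv_0_lt_compat; lra).
    lra.
  - rewrite (cc_S l a (S n)), (cc_S l a n).
    destruct (a1_pos l a Hl) as [Hp He].
    pose proof (lower l Hl (S n) (alpha_seq l a 1)).
    pose proof (IH (alpha_seq l a 1)).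
    assert (/ cc l (alpha_seq l a 1) n < / cc l (alpha_seq l a 1) (S n)).
    { apply Rinv_lt_contravar; auto. apply Rmult_lt_0_compat; lra. }
    lra.
Qed.

Lemma lam_pos (p : nat) : (3 <= p)%nat -> 0 < lam p.
Proof.
  intro Hp. unfold lam. apply Rmult_lt_0_compat; [lra|].
  assert (H3 : 3 <= INR p) by (replace 3 with (INR 3) by (simpl; lra); apply le_INR; auto).
  pose proof PI_RGT_0.
  apply cos_gt_0.
  - assert (0 < PI / INR p) by (apply Rdiv_lt_0_compat; lra). lra.
  - apply Rmult_lt_compat_l; auto. apply Rinv_lt_contravar; lra.
Qed.

Theorem lemma2p1 (p : nat) (Hp : (3 <= p)%nat) (alpha : R) :
  exists L : R,
    Un_cv (fun n => lcf_finite (lam p) (lcf_digits (lam p) alpha) n) L.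
Proof.
  pose proof (lam_pos p Hp) as Hl.
  destruct (decreasing_cv (fun n => cc (lam p) alpha n)) as [L HL].
  - intro n. left. apply decr; auto.
  - exists (- alpha). intros x [n ->]. unfold opp_seq. pose proof (lower (lam p) Hl n alpha). lra.
  - exists L. exact HL.
Qed.
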